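(* Let $\mathbb{S}=[S_m,S_M]$ with $S_m<S_M$, and let $h$ be a continuously differentiable, monotonically non-decreasing link function (defined on an open interval containing all points at which it is evaluated below) whose range over $\mathbb{S}$ is the compact interval $[h(S_m),h(S_M)]$, with $h(S_M)>h(S_m)$. Fix $w_u$ in the interior of $\mathbb{S}$, a bias $d\in\mathbb{R}$ and a width $\tau>0$, let $\mathbb{S}_u=[w_u-\tau/2,\,w_u+\tau/2]\subset\mathbb{S}$, and let the observed score be $z(w)=w+I_u(w)\,d$, where $I_u(w)=1$ if $w\in\mathbb{S}_u$ and $I_u(w)=0$ otherwise, with $w$ uniformly distributed on $\mathbb{S}$. Suppose the model predicts $\hat z=w+\hat\delta$, where the constant offset $\hat\delta=\hat\delta(\tau,d)$ is optimal for the expected matching loss, i.e. it satisfies $$\int_{S_m}^{S_M}\big[h(w+\hat\delta)-h(z(w))\big]\,dw=0 .$$ Define $\Delta_{\mathrm{BUST}}(w_u)=\lim_{\tau\to0}\frac{1}{\tau}(\hat z-w)=\lim_{\tau\to 0}\hat\delta/\tau$ and $\Delta_{\mathrm{BLUST}}(w_u)=\lim_{\tau\to0,\,d\to0}\frac{1}{d\tau}(\hat z-w)$. Then $$\Delta_{\mathrm{BUST}}(w_u)=\frac{h(w_u+d)-h(w_u)}{h(S_M)-h(S_m)},\qquad \Delta_{\mathrm{BLUST}}(w_u)=\frac{h'(w_u)}{h(S_M)-h(S_m)}.$$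
   Context: A link function $h$ with primitive $H$ (so $H'=h$) defines the scalar matching loss $\mathcal{L}_m(\hat s,s)=H(\hat s)-H(s)-(\hat s-s)h(s)=\int_s^{\hat s}[h(z)-h(s)]\,dz$, whose gradient in $\hat s$ is $h(\hat s)-h(s)$. Links are taken monotonically non-decreasing, so the loss is convex in $\hat s$. In the bias-underspecification model, the model has no feature distinguishing $\mathbb{S}_u$ from the rest of $\mathbb{S}$, so it can only predict the collective score shifted by a single constant offset $\hat\delta$, chosen so that the expected gradient of the matching loss (over $w\sim U(\mathbb{S})$) vanishes. *)

(* Defs.v *)
From HB Require Import structures.
From mathcomp Require Import all_boot all_order all_algebra.
From mathcomp Require Import all_classical all_reals all_analysis.
Set Implicit Arguments. Unset Strict Implicit. Unset Printing Implicit Defensive.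
Import Order.TTheory GRing.Theory Num.Theory.
Import numFieldNormedType.Exports.
Local Open Scope classical_set_scope.
Local Open Scope ring_scope.

Section Defs.
Variable R : realType.

Definition Iu (wu tau w : R) : R :=
  if (wu - tau / 2 <= w <= wu + tau / 2) then 1 else 0.

Definition zobs (wu tau d w : R) : R := w + Iu wu tau w * d.

Definition offset_opt (h : R -> R) (Sm SM wu tau d delta : R) : Prop :=
  (\int[lebesgue_measure]_(w in `[Sm, SM]) (h (w + delta) - h (zobs wu tau d w))%:E
     = 0)%E.

(* all points at which h is evaluated in the optimality equation lie in the
   open interval ]a, b[ on which h is defined (C^1 and non-decreasing) *)
Definition evaluated_in (a b Sm SM wu tau d delta : R) : Prop :=
  forall w, Sm <= w <= SM ->
    (a < w + delta < b) /\ (a < zobs wu tau d w < b).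

End Defs.

(* Main.v *)
Require Import Defs.
From HB Require Import structures.
From mathcomp Require Import all_boot all_order all_algebra.
From mathcomp Require Import all_classical all_reals all_analysis.
From mathcomp Require Import ring lra.
Import Order.TTheory GRing.Theory Num.Theory.
Import numFieldNormedType.Exports.
Local Open Scope classical_set_scope.
Local Open Scope ring_scope.
Section S.
Context {R : realType}.
Notation mu := (@lebesgue_measure R).

Lemma der_cont (f : R -> R) x : derivable f x 1 -> {for x, continuous f}.
Proof. by move/derivable1_diffP/differentiable_continuous. Qed.

Lemma ftc2w (f F : R -> R) l r : l < r ->
  (forall x, l <= x <= r -> {for x, continuous f}) ->
  (forall x, l <= x <= r -> derivable F x 1 /\ derive1 F x = f x) ->
  (\int[mu]_(x in `[l, r]) (f x)%:E = (F r)%:E - (F l)%:E)%E.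
Proof.
move=> lr cf dF; apply: continuous_FTC2 => //.
- apply: continuous_in_subspaceT => x; rewrite inE /= in_itv /= => /cf; exact.
- split.
  + move=> x; rewrite in_itv /= => /andP[lx xr]; apply: (dF x _).1.
    by rewrite !ltW.
  + apply: cvg_at_right_filter; apply: der_cont; apply: (dF l _).1.
    by rewrite lexx ltW.
  + apply: cvg_at_left_filter; apply: der_cont; apply: (dF r _).1.
    by rewrite lexx ltW.
- move=> x; rewrite in_itv /= => /andP[lx xr]; apply: (dF x _).2.
  by rewrite !ltW.
Qed.
Lemma antider (f : R -> R) p q p' : p < p' -> p' < q ->
  (forall x, p < x < q -> {for x, continuous f}) ->
  exists F : R -> R, forall x, p' < x < q -> derivable F x 1 /\ derive1 F x = f x.
Proof.
move=> pp' p'q cf.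
exists (fun x => \int[mu]_(t in `[(p + p') / 2, x]) f t) => x /andP[p'x xq].
apply: (@continuous_FTC1_closed _ _ _ _ ((x + q) / 2)).
- lra.
- apply: continuous_compact_integrable; first exact: segment_compact.
  apply: continuous_in_subspaceT => y; rewrite inE /= in_itv /= => /andP[y1 y2].
  apply: cf; apply/andP; split; lra.
- lra.
- apply: cf; apply/andP; split; lra.
Qed.
Lemma cont_shift (f : R -> R) d x : {for x + d, continuous f} ->
  {for x, continuous (fun w => f (w + d))}.
Proof.
move=> cf.
have cs : {for x, continuous (fun w : R => w + d)}.
  by apply: cvgD; [exact: cvg_id | exact: cvg_cst].
exact: (continuous_comp cs cf).
Qed.

Lemma cont_sub (f g : R -> R) x : {for x, continuous f} -> {for x, continuous g} ->
  {for x, continuous (fun w => f w - g w)}.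
Proof. by move=> cf cg; apply: cvgB. Qed.

Lemma pos4 (x1 x2 x3 x4 : R) : 0 < x1 -> 0 < x2 -> 0 < x3 -> 0 < x4 ->
  exists e, [/\ 0 < e, e < x1, e < x2, e < x3 & e < x4].
Proof.
move=> h1 h2 h3 h4.
pose m := Num.min (Num.min x1 x2) (Num.min x3 x4).
have m0 : 0 < m by rewrite /m !lt_min h1 h2 h3 h4.
have m1 : m <= x1 by rewrite /m !ge_min lexx.
have m2 : m <= x2 by rewrite /m !ge_min lexx !orbT.
have m3 : m <= x3 by rewrite /m !ge_min lexx !orbT.
have m4 : m <= x4 by rewrite /m !ge_min lexx !orbT.
exists (m / 2); split; lra.
Qed.
Lemma der_isd (F f : R -> R) x : derivable F x 1 /\ derive1 F x = f x ->
  is_derive x 1 F (f x).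
Proof.
move=> [dF <-]; rewrite derive1E; exact: derivableP.
Qed.

Lemma mvt_gen (F f : R -> R) l r : l < r ->
  (forall x, l <= x <= r -> derivable F x 1 /\ derive1 F x = f x) ->
  exists2 c, l < c < r & F r - F l = f c * (r - l).
Proof.
move=> lr dF.
have H1 : forall x, x \in `]l, r[ -> is_derive x 1 F (f x).
  move=> x; rewrite in_itv /= => /andP[? ?]; apply: der_isd; apply: dF.
  by rewrite !ltW.
have H2 : {within `[l, r], continuous F}.
  apply: continuous_in_subspaceT => x; rewrite inE /= in_itv /= => xin.
  exact: der_cont (dF x xin).1.
have [c cin E] := MVT lr H1 H2.
by exists c => //; move: cin; rewrite in_itv.
Qed.

Lemma isd_der (F : R -> R) (x df : R) : is_derive x 1 F df ->
  derivable F x 1 /\ derive1 F x = df.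
Proof. by move=> H; split; [exact: ex_derive | rewrite derive1E; exact: derive_val]. Qed.

Lemma isd_shift (x c : R) : is_derive x 1 (fun w : R => w + c) 1.
Proof.
have := is_deriveD (is_derive_id x 1) (is_derive_cst c x 1).
by rewrite addr0.
Qed.

Lemma icont (f : R -> R) l r : (forall x, l <= x <= r -> {for x, continuous f}) ->
  mu.-integrable `[l, r] (EFin \o f).
Proof.
move=> cf; apply: continuous_compact_integrable; first exact: segment_compact.
apply: continuous_in_subspaceT => x; rewrite inE /= in_itv /= => xin.
exact: cf.
Qed.

Lemma dq (f : R -> R) (x : R) : derivable f x 1 ->
  (fun e : R => e^-1 * (f (e + x) - f x)) @ 0^' --> derive1 f x.
Proof.
move=> /cvg_ex[l Hl]; rewrite derive1E /derive (cvg_lim _ Hl) //.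
have -> : (fun e : R => e^-1 * (f (e + x) - f x)) =
    (fun h : R => h^-1 *: ((f \o shift x) (h *: 1) - f x)).
  by apply/funext => e /=; rewrite /shift scaler1.
exact: Hl.
Qed.

Section H.
Variables (a b Sm SM wu : R) (h : R -> R).
Hypothesis hder : forall x, a < x < b -> derivable h x 1 /\ {for x, continuous (derive1 h)}.
Hypothesis hmono : forall x y, a < x -> x <= y -> y < b -> h x <= h y.

Lemma hcont x : a < x < b -> {for x, continuous h}.
Proof. by move=> /hder[/der_cont]. Qed.


Lemma Jmvt d l r : l < r -> a < l -> a < l + d -> r < b -> r + d < b ->
  exists2 xi, l < xi < r &
  (\int[mu]_(w in `[l, r]) (h (w + d) - h w)%:E = ((r - l) * (h (xi + d) - h xi))%:E)%E.
Proof.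
move=> lr al ald rb rdb.
have [e [e0 e1 e2 e3 e4]] := pos4 (l - a) (l + d - a) (b - r) (b - r - d)
  ltac:(lra) ltac:(lra) ltac:(lra) ltac:(lra).
pose k := fun w => h (w + d) - h w.
have ck : forall x, l - e < x < r + e -> {for x, continuous k}.
  move=> x /andP[x1 x2]; apply: cont_sub.
    apply: cont_shift; apply: hcont; apply/andP; split; lra.
  apply: hcont; apply/andP; split; lra.
have [F dF] := antider k (l - e) (r + e) (l - e / 2) ltac:(lra) ltac:(lra) ck.
have dF' : forall x, l <= x <= r -> derivable F x 1 /\ derive1 F x = k x.
  move=> x /andP[? ?]; apply: dF; apply/andP; split; lra.
rewrite (@ftc2w k F l r lr) //; last first.
  move=> x /andP[? ?]; apply: ck; apply/andP; split; lra.
have [c cin E] := @mvt_gen F k l r lr dF'.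
exists c => //.
by rewrite -EFinB E /k mulrC.
Qed.
Hypotheses (SmM : Sm < SM) (aSm : a < Sm) (SMb : SM < b).
Lemma Iform : exists e1, exists H : R -> R, 0 < e1 /\ a < Sm - e1 /\ SM + e1 < b /\
  (forall x, Sm - e1 < x < SM + e1 -> derivable H x 1 /\ derive1 H x = h x) /\
  forall dl, - e1 < dl < e1 ->
  (\int[mu]_(w in `[Sm, SM]) (h (w + dl) - h w)%:E =
    ((H (SM + dl) - H (Sm + dl)) - (H SM - H Sm))%:E)%E.
Proof.
have [e [e0 e1 e2 _ _]] := pos4 (Sm - a) (b - SM) 1 1
  ltac:(by rewrite subr_gt0) ltac:(by rewrite subr_gt0) ltr01 ltr01.
have hc : forall x, a < x < b -> {for x, continuous h} by move=> x /hcont.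
have l1 : a < Sm - e by lra.
have l2 : Sm - e < b.
  move: SmM SMb e0 => /= *. lra.
have [H dH] := antider h a b (Sm - e) l1 l2 hc.
exists e, H; split => //; split; first lra; split; first lra; split.
  move=> x /andP[? ?]; apply: dH; apply/andP; split; lra.
move=> dl /andP[dl1 dl2].
have cs : forall x, Sm <= x <= SM -> {for x, continuous (fun w => h (w + dl))}.
  move=> x /andP[? ?]; apply: cont_shift; apply: hc; apply/andP; split; lra.
have c0 : forall x, Sm <= x <= SM -> {for x, continuous h}.
  move=> x /andP[? ?]; apply: hc; apply/andP; split; lra.
rewrite integralB_EFin //.
- rewrite (@ftc2w (fun w => h (w + dl)) (fun w => H (w + dl)) Sm SM SmM cs).
    rewrite (@ftc2w h H Sm SM SmM c0).
      by rewrite -!EFinB.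
    move=> x /andP[? ?]; apply: dH; apply/andP; split; lra.
  move=> x /andP[? ?]; apply: isd_der.
  have := is_derive1_comp (f := H) (g := fun w => w + dl) (x := x) (a := h (x + dl)) (b := 1).
  rewrite mulr1; apply; last exact: isd_shift.
  have [dH1 dH2] := dH (x + dl) ltac:(apply/andP; split; lra).
  by rewrite -dH2 derive1E; apply: derivableP.
- apply: continuous_compact_integrable; first exact: segment_compact.
  apply: continuous_in_subspaceT => x; rewrite inE /= in_itv /= => xin.
  exact: cs.
- apply: continuous_compact_integrable; first exact: segment_compact.
  apply: continuous_in_subspaceT => x; rewrite inE /= in_itv /= => xin.
  exact: c0.
Qed.


Lemma Imono d1 d2 : d1 <= d2 ->
  (forall w, Sm <= w <= SM -> a < w + d1 < b) ->
  (forall w, Sm <= w <= SM -> a < w + d2 < b) ->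
  (\int[mu]_(w in `[Sm, SM]) (h (w + d1) - h w)%:E <=
   \int[mu]_(w in `[Sm, SM]) (h (w + d2) - h w)%:E)%E.
Proof.
move: (SmM) (aSm) (SMb) => ? ? ? d12 v1 v2.
have c0 : forall x, Sm <= x <= SM -> {for x, continuous h}.
  move=> x /andP[? ?]; apply: hcont; apply/andP; split; lra.
apply: le_integral => //.
- apply: icont => x xin; apply: cont_sub; last exact: c0.
  by apply: cont_shift; apply: hcont; apply: v1.
- apply: icont => x xin; apply: cont_sub; last exact: c0.
  by apply: cont_shift; apply: hcont; apply: v2.
- move=> x; rewrite inE /= in_itv /= => xin.
  rewrite lee_fin lerD2r; have := v1 x xin; have := v2 x xin.
  move=> /andP[? ?] /andP[? ?]; apply: hmono => //; lra.
Qed.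

Lemma Conv d tau dl : 0 < tau -> Sm <= wu - tau / 2 -> wu + tau / 2 <= SM ->
  evaluated_in a b Sm SM wu tau d dl -> offset_opt h Sm SM wu tau d dl ->
  (forall w, Sm <= w <= SM -> a < w + dl < b) /\
  exists2 xi, wu - tau / 2 < xi < wu + tau / 2 &
   (\int[mu]_(w in `[Sm, SM]) (h (w + dl) - h w)%:E = (tau * (h (xi + d) - h xi))%:E)%E.
Proof.
move: (SmM) (aSm) (SMb) => ? ? ? t0 lS rS ev op.
split; first by move=> w /ev [].
have lr : wu - tau / 2 < wu + tau / 2 by lra.
have Il : Iu wu tau (wu - tau / 2) = 1 by rewrite /Iu lexx ltW.
have Ir : Iu wu tau (wu + tau / 2) = 1 by rewrite /Iu lexx ltW.
have [_ ] := ev (wu - tau / 2) ltac:(apply/andP; split; lra).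
rewrite /zobs Il mul1r => /andP[l1 l2].
have [_ ] := ev (wu + tau / 2) ltac:(apply/andP; split; lra).
rewrite /zobs Ir mul1r => /andP[r1 r2].
have [xi xiin J] := @Jmvt d _ _ lr ltac:(lra) l1 ltac:(lra) r2.
exists xi => //.
have -> : tau = wu + tau / 2 - (wu - tau / 2) by lra.
rewrite -J.
pose k := fun w => h (w + d) - h w.
have cI : forall x, Sm <= x <= SM -> {for x, continuous (fun w => h (w + dl) - h w)}.
  move=> x xin; have [/andP[? ?] _] := ev x xin.
  apply: cont_sub; first by apply: cont_shift; apply: hcont; apply/andP; split.
  move: xin => /andP[? ?]; apply: hcont; apply/andP; split; lra.
have ck : forall x, wu - tau / 2 <= x <= wu + tau / 2 -> {for x, continuous k}.
  move=> x xin0; move: (xin0) => /andP[? ?].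
  have [_ ] := ev x ltac:(apply/andP; split; lra).
  have Ix : Iu wu tau x = 1 by rewrite /Iu xin0.
  rewrite /zobs Ix mul1r => /andP[? ?].
  apply: cont_sub; first by apply: cont_shift; apply: hcont; apply/andP; split.
  apply: hcont; apply/andP; split; lra.
have E1 : (\int[mu]_(w in `[Sm, SM]) (h (w + dl) - h (zobs wu tau d w))%:E =
  \int[mu]_(w in `[Sm, SM]) ((h (w + dl) - h w) - (k \_ `[wu - tau / 2, wu + tau / 2]) w)%:E)%E.
  apply: eq_integral => w _; congr EFin; rewrite /zobs /Iu patchE mem_setE in_itv /=.
  case: ifP => _; first by rewrite mul1r /k; ring.
  by rewrite mul0r addr0 subr0.
have sub : `[wu - tau / 2, wu + tau / 2] `<=` `[Sm, SM].
  move=> x /=; rewrite !in_itv /= => /andP[? ?]; apply/andP; split; lra.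
have iK : mu.-integrable `[Sm, SM] (EFin \o (k \_ `[wu - tau / 2, wu + tau / 2])).
  rewrite -restrict_EFin; apply/integrable_restrict => //.
  rewrite setIidr //; exact: icont ck.
move: op; rewrite /offset_opt E1 integralB_EFin //; last exact: icont cI.
have E3 : (\int[mu]_(x in `[Sm, SM]) ((k \_ `[(wu - tau / 2)%R, (wu + tau / 2)%R]) x)%:E =
   \int[mu]_(x in `[(wu - tau / 2)%R, (wu + tau / 2)%R]) (k x)%:E)%E.
  rewrite integral_mkcond [RHS]integral_mkcond; apply: eq_integral => x _.
  rewrite !patchE; case: (boolP (x \in `[(wu - tau / 2)%R, (wu + tau / 2)%R]%classic)) => xI.
    have xS : x \in `[Sm, SM]%classic by apply/mem_set/sub/set_mem.
    by rewrite xS.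
  by case: ifP.
rewrite E3 => op.
rewrite -(subeK (\int[mu]_(w in `[Sm, SM]) (h (w + dl) - h w)%:E)
  (y := (\int[mu]_(x in `[(wu - tau / 2)%R, (wu + tau / 2)%R]) (k x)%:E)%E)); last by rewrite J.
by rewrite op add0e.
Qed.

Variables (e1 : R) (H : R -> R).
Hypothesis hlt : h Sm < h SM.
Hypotheses (he1 : 0 < e1) (ae1 : a < Sm - e1) (e1b : SM + e1 < b).
Hypothesis dH : forall x, Sm - e1 < x < SM + e1 -> derivable H x 1 /\ derive1 H x = h x.
Let P dl := (H (SM + dl) - H (Sm + dl)) - (H SM - H Sm).
Hypothesis IH : forall dl, - e1 < dl < e1 ->
  (\int[mu]_(w in `[Sm, SM]) (h (w + dl) - h w)%:E = (P dl)%:E)%E.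
Let Q dl := P dl / dl.
Let c := h SM - h Sm.
Let I dl := (\int[mu]_(w in `[Sm, SM]) (h (w + dl) - h w)%:E)%E.

Lemma Qlim : Q @ 0^' --> c.
Proof.
move: (SmM) (aSm) (SMb) (he1) => ? ? ? ?.
have -> : Q = (fun e => e^-1 * (H (e + SM) - H SM) - e^-1 * (H (e + Sm) - H Sm)).
  by apply/funext => e; rewrite /Q /P [SM + e]addrC [Sm + e]addrC; ring.
have [dS hS] := dH SM ltac:(apply/andP; split; lra).
have [dm hm] := dH Sm ltac:(apply/andP; split; lra).
rewrite /c -hS -hm; apply: cvgB; exact: dq.
Qed.

Lemma valid_small dl : - e1 < dl < e1 -> forall w, Sm <= w <= SM -> a < w + dl < b.
Proof.
move: (SmM) (aSm) (SMb) (he1) (ae1) (e1b) => ? ? ? ? ? ? /andP[? ?] w /andP[? ?].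
apply/andP; split; lra.
Qed.

Lemma Dto0 {T : Type} (F : set_system T) {FF : Filter F} (df Jf : T -> R) :
  (\forall t \near F, (forall w, Sm <= w <= SM -> a < w + df t < b) /\ I (df t) = (Jf t)%:E) ->
  Jf @ F --> 0 -> df @ F --> 0.
Proof.
move: (SmM) (aSm) (SMb) (he1) (ae1) (e1b) => ? ? ? ? ? ? HI HJ.
have c0 : 0 < c by rewrite /c subr_gt0.
apply/cvgrPdist_lt => eps eps0.
have Qr : Q @ 0^'+ --> c by apply: cvg_dnbhs_at_right; exact: Qlim.
have Ql : (Q \o -%R) @ 0^'+ --> c.
  by move/cvg_at_leftNP: (cvg_dnbhs_at_left Qlim); rewrite oppr0.
have : \forall x \near 0^'+, [/\ 0 < x, 0 < Q x, 0 < Q (- x), x < e1 & x < eps].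
  near=> x; split.
  - by near: x; exact: nbhs_right_gt.
  - by near: x; exact: (cvgr_gt _ Qr).
  - by near: x; exact: (cvgr_gt _ Ql).
  - by near: x; exact: nbhs_right_lt.
  - by near: x; exact: nbhs_right_lt.
move=> /filter_ex[ep [ep0 Qp Qn ep1 ep2]].
have Pp : 0 < P ep.
  by move: Qp; rewrite /Q pmulr_lgt0 // invr_gt0.
have Pn : P (- ep) < 0.
  by move: Qn; rewrite /Q nmulr_lgt0 ?invr_lt0 ?oppr_lt0 // => /ltW; rewrite lt_def.
pose m := Num.min (P ep) (- P (- ep)).
have m0 : 0 < m by rewrite lt_min Pp oppr_gt0 Pn.
have m1 : m <= P ep by rewrite ge_min lexx.
have m2 : m <= - P (- ep) by rewrite ge_min lexx orbT.
have Ip : I ep = (P ep)%:E by apply: IH; apply/andP; split; lra.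
have In : I (- ep) = (P (- ep))%:E by apply: IH; apply/andP; split; lra.
have vp := @valid_small ep ltac:(apply/andP; split; lra).
have vn := @valid_small (- ep) ltac:(apply/andP; split; lra).
have HJm := (cvgrPdist_lt Jf 0).1 HJ m m0.
near=> t.
have [vt It] : (forall w, Sm <= w <= SM -> a < w + df t < b) /\ I (df t) = (Jf t)%:E.
  by near: t.
have : `|0 - Jf t| < m by near: t; exact: HJm.
rewrite !sub0r !normrN ltr_norml => /andP[J1 J2].
apply: (lt_trans _ ep2); rewrite ltr_norml; apply/andP; split.
- rewrite ltNge; apply/negP => dle.
  have := @Imono (df t) (- ep) dle vt vn.
  rewrite /I in It In; rewrite It In lee_fin; lra.
- rewrite ltNge; apply/negP => dle.
  have := @Imono ep (df t) dle vp vt.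
  rewrite /I in It Ip; rewrite It Ip lee_fin; lra.
Unshelve. all: by end_near.
Qed.

Lemma MainL {T : Type} (F : set_system T) {FF : ProperFilter F} (df sf gf : T -> R) (L : R) :
  (\forall t \near F, (forall w, Sm <= w <= SM -> a < w + df t < b) /\
     I (df t) = (sf t * gf t)%:E /\ sf t != 0) ->
  sf @ F --> 0 -> gf @ F --> L -> (fun t => df t / sf t) @ F --> L / c.
Proof.
move: (SmM) (aSm) (SMb) (he1) (ae1) (e1b) => ? ? ? ? ? ? HI Hs Hg.
have c0 : c != 0 by rewrite /c subr_eq0 gt_eqF.
have HJ : (fun t => sf t * gf t) @ F --> 0.
  by rewrite -(mul0r L); exact: cvgM.
have Hd : df @ F --> 0.
  apply: (@Dto0 _ F _ df (fun t => sf t * gf t) _ HJ); near=> t.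
  have [? [? _]] : (forall w, Sm <= w <= SM -> a < w + df t < b) /\
     I (df t) = (sf t * gf t)%:E /\ sf t != 0 by near: t.
  by split.
pose Q' x := if x == 0 then c else Q x.
have cQ : Q' @ 0 --> c.
  have -> : c = Q' 0 by rewrite /Q' eqxx.
  apply/continuous_withinNx; rewrite {2}/Q' eqxx.
  apply: cvg_trans (near_eq_cvg _) Qlim.
  near=> x; rewrite /Q' ifN //; near: x; exact: nbhs_dnbhs_neq.
have HQ : (Q' \o df) @ F --> c by apply: cvg_comp Hd cQ.
have Hl : (fun t => gf t / (Q' \o df) t) @ F --> L / c.
  by apply: cvgM => //; apply: cvgV.
apply: cvg_trans (near_eq_cvg _) Hl.
near=> t.
have [vt [It sn0]] : (forall w, Sm <= w <= SM -> a < w + df t < b) /\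
     I (df t) = (sf t * gf t)%:E /\ sf t != 0 by near: t.
have Qn0 : (Q' \o df) t != 0 by near: t; exact: (cvgr_neq0 _ HQ).
have : `|0 - df t| < e1 by near: t; exact: ((cvgrPdist_lt df 0).1 Hd e1 he1).
rewrite sub0r normrN ltr_norml => dsm.
have PE : sf t * gf t = P (df t).
  by have := IH _ dsm; rewrite /I in It; rewrite It => -[].
move: Qn0; rewrite /= /Q'.
case: (eqVneq (df t) 0) => [d0|dn0] Qn0.
  move: PE; rewrite d0 /P !addr0 subrr => /eqP; rewrite mulf_eq0 (negbTE sn0) /= => /eqP ->.
  by rewrite !mul0r.
move: Qn0; rewrite /Q -PE => Qn0.
have gn0 : gf t != 0 by apply: contraNneq Qn0 => ->; rewrite mulr0 mul0r.
rewrite /=; field.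
by rewrite sn0 gn0 dn0.
Unshelve. all: by end_near.
Qed.
End H.
End S.

Lemma nearfst {R : realType} {U : Type} (F : set_system R) (G : set_system U) {FG : Filter G}
  (P : R -> Prop) : F P -> filter_prod F G (fun p => P p.1).
Proof.
move=> FP; exists (P, setT); first by split => //; exact: filterT.
by move=> [x y] [/= ? _].
Qed.

Lemma nearsnd {R : realType} {U : Type} (F : set_system U) (G : set_system R) {FF : Filter F}
  (P : R -> Prop) : G P -> filter_prod F G (fun p => P p.2).
Proof.
move=> GP; exists (setT, P); first by split => //; exact: filterT.
by move=> [x y] [_ /= ?].
Qed.

Lemma nF {R : realType} (P : R -> Prop) : (\forall x \near 0^'+, P x) ->
  \forall p \near filter_prod (0^'+ : set_system R) (0^' : set_system R), P p.1.
Proof. exact: nearfst. Qed.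

Lemma nS {R : realType} (P : R -> Prop) : (\forall x \near 0^', P x) ->
  \forall p \near filter_prod (0^'+ : set_system R) (0^' : set_system R), P p.2.
Proof. exact: nearsnd. Qed.

Lemma nS_abs (R : realType) (e : R) : 0 < e ->
  \forall p \near filter_prod (0^'+ : set_system R) (0^' : set_system R), `|p.2| <= e.
Proof.
move=> e0; apply: (@nearsnd R R (0^'+) (0^') _ (fun x => `|x| <= e)).
near=> x; near: x; exact: dnbhs0_le.
Unshelve. all: by end_near.
Qed.
Lemma nF_lt (R : realType) (e : R) : 0 < e ->
  \forall p \near filter_prod (0^'+ : set_system R) (0^' : set_system R), 0 < p.1 /\ p.1 < e.
Proof.
move=> e0; apply: (@nearfst R R (0^'+) (0^') _ (fun x => 0 < x /\ x < e)).
near=> x; split; near: x; [exact: nbhs_right_gt | exact: nbhs_right_lt].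
Unshelve. all: by end_near.
Qed.
Lemma nS_neq (R : realType) :
  \forall p \near filter_prod (0^'+ : set_system R) (0^' : set_system R), p.2 != 0.
Proof. apply: (@nearsnd R R (0^'+) (0^') _ (fun x => x != 0)). exact: withinT. Qed.

Lemma hdiff {R : realType} (a b : R) (h : R -> R) :
  (forall x, a < x < b -> derivable h x 1 /\ {for x, continuous (derive1 h)}) ->
  forall x d, d != 0 -> a < x < b -> a < x + d < b ->
  exists e, `|x - e| <= `|d| /\ h (x + d) - h x = d * derive1 h e.
Proof.
move=> hder x d dn0 /andP[x1 x2] /andP[xd1 xd2].
have dh : forall y, a < y < b -> derivable h y 1 /\ derive1 h y = derive1 h y.
  by move=> y /hder[].
case: (ltgtP d 0) => [dlt|dgt|d0]; last by move: dn0; rewrite d0 eqxx.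
- have xdx : x + d < x by lra.
  have [e /andP[e1 e2] E] := @mvt_gen R h (derive1 h) (x + d) x xdx
    ltac:(move=> y /andP[? ?]; apply: dh; apply/andP; split; lra).
  exists e; split.
    rewrite (ltr0_norm dlt) ler_norml; apply/andP; split; lra.
  have -> : h (x + d) - h x = - (h x - h (x + d)) by ring.
  rewrite E; ring.
- have xdx : x < x + d by lra.
  have [e /andP[e1 e2] E] := @mvt_gen R h (derive1 h) x (x + d) xdx
    ltac:(move=> y /andP[? ?]; apply: dh; apply/andP; split; lra).
  exists e; split.
    rewrite (gtr0_norm dgt) ler_norml; apply/andP; split; lra.
  rewrite E; ring.
Qed.

Theorem theorem1 (R : realType) (a b Sm SM wu : R) (h : R -> R) :
  (* h is C^1 and non-decreasing on the open interval ]a, b[ *)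
  (forall x, a < x < b -> derivable h x 1 /\ {for x, continuous (derive1 h)}) ->
  (forall x y, a < x -> x <= y -> y < b -> h x <= h y) ->
  (* S = [Sm, SM] with Sm < SM, contained in ]a, b[ *)
  Sm < SM -> a < Sm -> SM < b ->
  h Sm < h SM ->
  (* wu in the interior of S *)
  Sm < wu < SM ->
  (* BUST: for a fixed bias d, delta(tau) optimal for all small tau > 0 *)
  (forall (d : R) (delta : R -> R),
     (\forall tau \near 0^'+,
        evaluated_in a b Sm SM wu tau d (delta tau) /\
        offset_opt h Sm SM wu tau d (delta tau)) ->
     (fun tau => delta tau / tau) @ 0^'+ -->
       (h (wu + d) - h wu) / (h SM - h Sm))
  /\
  (* BLUST: delta(tau, d) optimal for all small tau > 0 and small d <> 0 *)
  (forall delta : R -> R -> R,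
     (\forall tau \near 0^'+ & d \near 0^',
        evaluated_in a b Sm SM wu tau d (delta tau d) /\
        offset_opt h Sm SM wu tau d (delta tau d)) ->
     (fun p : R * R => delta p.1 p.2 / (p.2 * p.1)) @ filter_prod 0^'+ 0^' -->
       derive1 h wu / (h SM - h Sm)).
Proof.
move=> hder hmono SmM aSm SMb hlt /andP[wu1 wu2].
have [e1 [H [he1 [ae1 [e1b [dH IH]]]]]] := @Iform R a b Sm SM h hder SmM aSm SMb.
have M := @MainL R a b Sm SM h hder hmono SmM aSm SMb e1 H hlt he1 ae1 e1b dH IH.
have hc : forall x, a < x < b -> {for x, continuous h}.
  by move=> x hx; exact: der_cont (hder x hx).1.
pose rho := Num.min (wu - Sm) (SM - wu).
have rho0 : 0 < rho by rewrite lt_min !subr_gt0 wu1 wu2.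
have rho1 : rho <= wu - Sm by rewrite ge_min lexx.
have rho2 : rho <= SM - wu by rewrite ge_min lexx orbT.
split.
  move=> d delta Hn.
  have [t0 [t00 [ev0 _]]] : exists t0, 0 < t0 /\ (evaluated_in a b Sm SM wu t0 d (delta t0) /\
        offset_opt h Sm SM wu t0 d (delta t0)).
    apply: (@filter_ex R (0^'+) _); near=> t; split; last by near: t.
    by near: t; exact: nbhs_right_gt.
  have wud : a < wu + d < b.
    have [_] := ev0 wu ltac:(apply/andP; split; lra).
    by rewrite /zobs /Iu ifT ?mul1r //; apply/andP; split; lra.
  pose k x := h (x + d) - h x.
  have ck : {for wu, continuous k}.
    apply: cont_sub; [apply: cont_shift; exact: hc | apply: hc; apply/andP; split; lra].
  pose I dl := (\int[lebesgue_measure]_(w in `[Sm, SM]) (h (w + dl) - h w)%:E)%E.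
  have key : \forall t \near 0^'+, (forall w, Sm <= w <= SM -> a < w + delta t < b) /\
      exists2 xi, wu - t / 2 < xi < wu + t / 2 & I (delta t) = (t * k xi)%:E.
    near=> t.
    have t0' : 0 < t by near: t; exact: nbhs_right_gt.
    have tr : t < rho by near: t; exact: nbhs_right_lt.
    have [ev op] : evaluated_in a b Sm SM wu t d (delta t) /\
        offset_opt h Sm SM wu t d (delta t) by near: t.
    exact: (@Conv R a b Sm SM wu h hder SmM aSm SMb d t (delta t) t0' ltac:(lra) ltac:(lra) ev op).
  apply: (M _ (0^'+) _ delta (fun t => t) (fun t => fine (I (delta t)) / t) (h (wu + d) - h wu)).
  - near=> t.
    have t0' : 0 < t by near: t; exact: nbhs_right_gt.
    have [vt [xi xin It]] : (forall w, Sm <= w <= SM -> a < w + delta t < b) /\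
      exists2 xi, wu - t / 2 < xi < wu + t / 2 & I (delta t) = (t * k xi)%:E by near: t.
    split => //; split; last by rewrite gt_eqF.
    by rewrite /I in It *; rewrite It /= mulrCA mulfV ?gt_eqF // mulr1.
  - by apply: cvg_at_right_filter; exact: cvg_id.
  - apply/cvgrPdist_lt => eps eps0.
    have Hk : \forall t \near wu, `|k wu - k t| < eps by exact: (cvgrPdist_lt _ _).1 ck eps eps0.
    move: Hk => /nbhs_ballP[eta eta0 Hb].
    near=> t.
    have t0' : 0 < t by near: t; exact: nbhs_right_gt.
    have te : t < eta by near: t; exact: nbhs_right_lt.
    have [vt [xi xin It]] : (forall w, Sm <= w <= SM -> a < w + delta t < b) /\
      exists2 xi, wu - t / 2 < xi < wu + t / 2 & I (delta t) = (t * k xi)%:E by near: t.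
    rewrite /I in It *; rewrite It /= mulrC mulKf ?gt_eqF //.
    apply: Hb; rewrite /ball /=.
    rewrite ltr_norml; apply/andP; split; lra.
move=> delta Hn.
pose I dl := (\int[lebesgue_measure]_(w in `[Sm, SM]) (h (w + dl) - h w)%:E)%E.
have key : \forall p \near filter_prod 0^'+ 0^', [/\ 0 < p.1, p.2 != 0,
    evaluated_in a b Sm SM wu p.1 p.2 (delta p.1 p.2),
    (forall w, Sm <= w <= SM -> a < w + delta p.1 p.2 < b) &
    exists2 xi, wu - p.1 / 2 < xi < wu + p.1 / 2 &
      I (delta p.1 p.2) = (p.1 * (h (xi + p.2) - h xi))%:E].
  near=> p.
  have [t0' tr] : 0 < p.1 /\ p.1 < rho by near: p; exact: nF_lt.
  have dn0 : p.2 != 0 by near: p; exact: nS_neq.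
  have [ev op] : evaluated_in a b Sm SM wu p.1 p.2 (delta p.1 p.2) /\
      offset_opt h Sm SM wu p.1 p.2 (delta p.1 p.2) by near: p; exact: Hn.
  have [vt xiP] := (@Conv R a b Sm SM wu h hder SmM aSm SMb p.2 p.1 (delta p.1 p.2) t0'
    ltac:(lra) ltac:(lra) ev op).
  by split.
apply: (M _ (filter_prod 0^'+ 0^') _ (fun p => delta p.1 p.2) (fun p => p.2 * p.1)
  (fun p => fine (I (delta p.1 p.2)) / (p.2 * p.1)) (derive1 h wu)).
- near=> p.
  have [t0' dn0 _ vt [xi xin It]] : [/\ 0 < p.1, p.2 != 0,
    evaluated_in a b Sm SM wu p.1 p.2 (delta p.1 p.2),
    (forall w, Sm <= w <= SM -> a < w + delta p.1 p.2 < b) &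
    exists2 xi, wu - p.1 / 2 < xi < wu + p.1 / 2 &
      I (delta p.1 p.2) = (p.1 * (h (xi + p.2) - h xi))%:E] by near: p.
  have sn0 : p.2 * p.1 != 0 by rewrite mulf_neq0 // gt_eqF.
  split => //; split => //.
  by rewrite /I in It *; rewrite It /= mulrCA mulfV // mulr1.
- apply/cvgrPdist_lt => eps eps0.
  near=> p.
  have [t0' t1] : 0 < p.1 /\ p.1 < 1 by near: p; exact: nF_lt.
  have de : `|p.2| <= eps / 2 by near: p; apply: nS_abs; lra.
  rewrite sub0r normrN normrM (gtr0_norm t0').
  have := normr_ge0 p.2; nra.
- have ck := (hder wu ltac:(apply/andP; split; lra)).2.
  apply/cvgrPdist_lt => eps eps0.
  have Hk : \forall t \near wu, `|derive1 h wu - derive1 h t| < eps.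
    exact: (cvgrPdist_lt _ _).1 ck eps eps0.
  move: Hk => /nbhs_ballP[eta /= eta0 Hb].
  near=> p.
  have [_ te] : 0 < p.1 /\ p.1 < eta by near: p; exact: nF_lt.
  have [_ tr] : 0 < p.1 /\ p.1 < rho by near: p; exact: nF_lt.
  have de : `|p.2| <= eta / 4 by near: p; apply: nS_abs; lra.
  have [t0' dn0 ev vt [xi xin It]] : [/\ 0 < p.1, p.2 != 0,
    evaluated_in a b Sm SM wu p.1 p.2 (delta p.1 p.2),
    (forall w, Sm <= w <= SM -> a < w + delta p.1 p.2 < b) &
    exists2 xi, wu - p.1 / 2 < xi < wu + p.1 / 2 &
      I (delta p.1 p.2) = (p.1 * (h (xi + p.2) - h xi))%:E] by near: p.
  have [_] := ev xi ltac:(apply/andP; split; lra).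
  have Ixi : Iu wu p.1 xi = 1 by rewrite /Iu ifT //; apply/andP; split; lra.
  rewrite /zobs Ixi mul1r => xid.
  have [e [eb E]] := @hdiff R a b h hder xi p.2 dn0 ltac:(apply/andP; split; lra) xid.
  rewrite /I in It *; rewrite It /= E.
  have -> : p.1 * (p.2 * derive1 h e) / (p.2 * p.1) = derive1 h e.
    by field; rewrite dn0 gt_eqF.
  apply: Hb; rewrite /ball /=.
  move: eb xin; rewrite ler_norml => /andP[? ?] /andP[? ?].
  rewrite ltr_norml; apply/andP; split; lra.
Unshelve. all: by end_near.
Qed.
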